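(* Let $\bm x \in \Delta_n \setminus \{\bm e_1,\dots,\bm e_n,\tfrac1n\bm e\}$ and $p \geqslant 2$. Let $S_p = \sum_{i=1}^n x_i^p$ and $w_i = x_i^p/S_p$ for $i=1,\dots,n$, and $\bm w = (w_1,\dots,w_n)$. Then the Shannon entropy $H(\bm w) = -\sum_{i=1}^n w_i \ln w_i$ satisfies $$0 \leqslant H(\bm w) \leqslant -\frac{p}{p-1}\ln \|\bm x\|_p.$$
   Context: $\|\bm x\|_p = (\sum_{i=1}^n x_i^p)^{1/p}$; $\Delta_n = \{\bm x \in \mathbb{R}^n_{\geqslant 0} : \sum_{i=1}^n x_i = 1\}$; $\bm e_i$ is the $i$-th standard unit vector and $\bm e$ the all-ones vector in $\mathbb{R}^n$. The convention $0\ln 0 = 0$ is used. *)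

(* Defs.v *)
From Stdlib Require Import Reals.
Open Scope R_scope.

(* finite sum  \sum_{i=0}^{n-1} f i  (vector entries indexed 0..n-1) *)
Fixpoint fsum (n : nat) (f : nat -> R) : R :=
  match n with
  | O => 0
  | S m => fsum m f + f m
  end.

(* real power t^p for t >= 0, with 0^p = 0 (p > 0) *)
Definition rpow (t p : R) : R := if Req_EM_T t 0 then 0 else Rpower t p.

Definition in_simplex (n : nat) (x : nat -> R) : Prop :=
  (forall i, (i < n)%nat -> 0 <= x i) /\ fsum n x = 1.

Definition is_unit_vector (n : nat) (x : nat -> R) (i : nat) : Prop :=
  forall j, (j < n)%nat -> x j = if Nat.eqb j i then 1 else 0.

Definition is_barycenter (n : nat) (x : nat -> R) : Prop :=
  forall j, (j < n)%nat -> x j = / INR n.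

Definition pnorm (n : nat) (p : R) (x : nat -> R) : R :=
  rpow (fsum n (fun i => rpow (x i) p)) (/ p).

Definition xlnx (t : R) : R := if Req_EM_T t 0 then 0 else t * ln t.

Definition entropy (n : nat) (w : nat -> R) : R := - fsum n (fun i => xlnx (w i)).

(* Main.v *)
Require Import Defs.
From Stdlib Require Import Reals Lra Lia.
Open Scope R_scope.

Lemma fsum_le n f g : (forall i, (i < n)%nat -> f i <= g i) -> fsum n f <= fsum n g.
Proof.
  induction n; simpl; intros H. lra.
  assert (fsum n f <= fsum n g) by (apply IHn; intros; apply H; auto).
  assert (f n <= g n) by (apply H; auto). lra.
Qed.

Lemma fsum_lin n a b f g :
  fsum n (fun i => a * f i + b * g i) = a * fsum n f + b * fsum n g.
Proof. induction n; simpl. ring. rewrite IHn. ring. Qed.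

Lemma fsum_ext n f g : (forall i, (i < n)%nat -> f i = g i) -> fsum n f = fsum n g.
Proof.
  induction n; simpl; intros H. auto.
  rewrite IHn by (intros; apply H; auto). rewrite H; auto.
Qed.

Lemma fsum_nonneg n f : (forall i, (i < n)%nat -> 0 <= f i) -> 0 <= fsum n f.
Proof. intros H. replace 0 with (fsum n (fun _ => 0)). apply fsum_le; auto.
  induction n; simpl; auto. rewrite IHn. ring. intros; apply H; auto. Qed.

Lemma fsum_term n f j : (forall i, (i < n)%nat -> 0 <= f i) -> (j < n)%nat -> f j <= fsum n f.
Proof.
  induction n; simpl; intros H Hj. lia.
  destruct (Nat.eq_dec j n) as [->|Hne].
  - assert (0 <= fsum n f) by (apply fsum_nonneg; intros; apply H; auto). lra.
  - assert (f j <= fsum n f) by (apply IHn; [intros; apply H; auto | lia]).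
    assert (0 <= f n) by (apply H; auto). lra.
Qed.

Lemma fsum_pos n f g : (forall i, (i < n)%nat -> 0 <= f i) ->
  (forall i, (i < n)%nat -> 0 <= g i) ->
  (forall i, (i < n)%nat -> 0 < f i -> 0 < g i) -> 0 < fsum n f -> 0 < fsum n g.
Proof.
  induction n; simpl; intros Hf Hg Hfg Hs. lra.
  destruct (Req_EM_T (f n) 0) as [E|E].
  - assert (0 < fsum n g) by (apply IHn; auto; lra).
    assert (0 <= g n) by auto. lra.
  - assert (0 < g n) by (apply Hfg; auto; assert (0 <= f n) by auto; lra).
    assert (0 <= fsum n g) by (apply fsum_nonneg; auto). lra.
Qed.

Lemma ln_le_m1 y : 0 < y -> ln y <= y - 1.
Proof. intros. pose proof (exp_ineq1_le (ln y)). rewrite exp_ln in H0; lra. Qed.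

Lemma rpow_nonneg t p : 0 <= rpow t p.
Proof. unfold rpow, Rpower. destruct Req_EM_T. lra. left; apply exp_pos. Qed.

Lemma ln_inv S : 0 < S -> ln (/ S) = - ln S.
Proof. intros. pose proof (ln_mult S (/S) H (Rinv_0_lt_compat _ H)).
  rewrite Rinv_r in H0 by lra. rewrite ln_1 in H0. lra. Qed.

Theorem lemma2 (n : nat) (x : nat -> R) (p : R) :
  in_simplex n x ->
  (forall i, (i < n)%nat -> ~ is_unit_vector n x i) ->
  ~ is_barycenter n x ->
  2 <= p ->
  let Sp := fsum n (fun i => rpow (x i) p) in
  let w := fun i => rpow (x i) p / Sp in
  0 <= entropy n w /\
  entropy n w <= - (p / (p - 1)) * ln (pnorm n p x).
Proof.
  intros [Hx Hs] _ _ Hp Sp w.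
  assert (HS : 0 < Sp).
  { apply (fsum_pos n x); auto. intros; apply rpow_nonneg.
    intros i Hi Hxi. unfold rpow. destruct Req_EM_T. lra. apply exp_pos. lra. }
  assert (Hw1 : fsum n w = 1).
  { unfold w. replace (fsum n (fun i => rpow (x i) p / Sp)) with
      (/Sp * fsum n (fun i => rpow (x i) p) + 0 * fsum n x).
    fold Sp. field. lra.
    rewrite <- fsum_lin. apply fsum_ext. intros. unfold Rdiv. ring. }
  assert (Hpt : forall i, (i < n)%nat ->
     0 <= - xlnx (w i) /\
     - xlnx (w i) <= (- (1/(p-1)) * ln Sp) * w i + (- (p/(p-1))) * (w i - x i)).
  { intros i Hi. pose proof (Hx i Hi) as Hxi.
    unfold w, rpow, xlnx. destruct (Req_EM_T (x i) 0) as [E|E].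
    - rewrite E. unfold Rdiv. rewrite Rmult_0_l.
      destruct Req_EM_T; [|lra]. split. lra. lra.
    - set (a := x i) in *. assert (Ha : 0 < a) by lra.
      set (r := Rpower a p).
      assert (Hr : 0 < r) by apply exp_pos.
      assert (Hwp : 0 < r / Sp) by (apply Rdiv_lt_0_compat; auto).
      destruct Req_EM_T as [E2|_]; [lra|].
      set (ww := r / Sp) in *.
      assert (Hrle : r <= Sp).
      { assert (T : rpow a p <= Sp).
        { apply (fsum_term n (fun i => rpow (x i) p) i); auto. intros; apply rpow_nonneg. }
        unfold rpow in T. destruct Req_EM_T in T; [lra|]. exact T. }
      assert (Hw1' : ww <= 1).
      { assert (ww * Sp = r) by (unfold ww; field; lra). nra. }
      assert (HL : ln ww = p * ln a - ln Sp).
      { unfold ww, Rdiv. rewrite ln_mult, ln_inv; auto.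
        unfold r. rewrite ln_Rpower. ring. apply Rinv_0_lt_compat; auto. }
      assert (Hz : 0 < a / ww) by (apply Rdiv_lt_0_compat; auto).
      pose proof (ln_le_m1 _ Hz) as Hz1.
      assert (Hlna : ln a = ln (a / ww) + ln ww).
      { rewrite <- ln_mult by auto. f_equal. field. lra. }
      pose proof (ln_le_m1 _ Hwp) as Hww. fold ww in Hww.
      split.
      + assert (ww * ln ww <= 0).
        { assert (ln ww <= 0) by lra. nra. }
        lra.
      + set (L := ln ww) in *. set (lz := ln (a / ww)) in *.
        assert (H0 : ww * lz <= a - ww).
        { apply (Rmult_le_compat_l ww) in Hz1; [|lra].
          replace (ww * (a / ww - 1)) with (a - ww) in Hz1 by (field; lra). lra. }
        assert (H1 : p * (ww * lz) <= p * (a - ww)) by (apply Rmult_le_compat_l; lra).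
        assert (H2 : ww * L = p * (ww * lz) + p * (ww * L) - ww * ln Sp).
        { replace (ww * L) with (ww * (p * ln a - ln Sp)) at 1 by (rewrite HL; auto).
          rewrite Hlna. ring. }
        assert (K : (p-1) * (- (ww * L)) <= - ln Sp * ww - p * (ww - a)) by lra.
        apply (Rmult_le_reg_l (p-1)); [lra|].
        replace ((p - 1) * (- (1 / (p - 1)) * ln Sp * ww + - (p / (p - 1)) * (ww - a)))
          with (- ln Sp * ww - p * (ww - a)) by (field; lra).
        lra. }
  set (A := - (1/(p-1)) * ln Sp). set (B := - (p/(p-1))).
  assert (Hneg : fsum n (fun i => - xlnx (w i)) = entropy n w).
  { unfold entropy. rewrite (fsum_ext n _ (fun i => (-1) * xlnx (w i) + 0 * xlnx (w i)))
      by (intros; ring).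
    rewrite fsum_lin. ring. }
  assert (Hpn : ln (pnorm n p x) = / p * ln Sp).
  { unfold pnorm, rpow. destruct Req_EM_T as [E|E]; [change (Sp = 0) in E; lra|]. apply ln_Rpower. }
  rewrite <- Hneg, Hpn. split.
  - apply fsum_nonneg. intros; apply Hpt; auto.
  - apply Rle_trans with (fsum n (fun i => (A + B) * w i + (- B) * x i)).
    + apply fsum_le. intros i Hi. destruct (Hpt i Hi) as [_ H]. fold A B in H. lra.
    + rewrite fsum_lin, Hw1, Hs. unfold A, B. right. field. lra.
Qed.
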